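(* Let $\Omega\subseteq\mathbb{R}^n$ be open, $u:\Omega\to\mathbb{R}^N$ continuous, $x\in\Omega$, $\xi\in\mathbb{S}^{N-1}$ and $(P,\mathbf{X})\in\mathbb{R}^{N\times n}\times(\mathbb{R}^N\otimes\mathbb{R}^{n\times n}_s)$. The following are equivalent: (i) $(P,\mathbf{X})\in J^{2,\xi}u(x)$; (ii) there exists an increasing $\sigma\in C^2(0,\infty)$ with $\sigma(0^+)=0$ such that, as $z\to0$, writing $Q(z):=u(z+x)-u(x)-Pz-\frac12\mathbf{X}:z\otimes z$, $$\xi^\top Q(z)\le-\frac{|\xi^\perp Q(z)|^2}{\sigma(|z|)|z|^2}+\sigma(|z|)|z|^2.$$
   Context: $\mathbb{R}^N\otimes\mathbb{R}^{n\times n}_s$ is the space of arrays $\mathbf{X}=(\mathbf{X}_{\alpha ij})$ symmetric in $i,j$; $\mathbf{X}:z\otimes z\in\mathbb{R}^N$ has components $\sum_{i,j}\mathbf{X}_{\alpha ij}z_iz_j$. For $a,b\in\mathbb{R}^N$, $a\vee b:=\frac12(a\otimes b+b\otimes a)$; matrix inequalities in the sense of quadratic forms; $\xi^\perp:=I-\xi\otimes\xi$. Second contact jet: $J^{2,\xi}u(x)$ is the set of $(P,\mathbf{X})$ for which there is a continuous $T:\mathbb{R}^n\setminus\{0\}\to\mathbb{R}^{N\times N}_s$ with $|T(y)|\to0$ as $y\to0$ and $\xi\vee[u(z)-u(x)-P(z-x)-\frac12\mathbf{X}:(z-x)\otimes(z-x)]\le|z-x|^2T(z-x)$ for all $z\ne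 x$ near $x$. *)

(* Defs.v *)
From HB Require Import structures.
From mathcomp Require Import all_boot all_order all_algebra.
From mathcomp Require Import all_classical all_reals all_analysis.
Set Implicit Arguments. Unset Strict Implicit. Unset Printing Implicit Defensive.
Import Order.TTheory GRing.Theory Num.Theory.
Import numFieldNormedType.Exports.
Local Open Scope classical_set_scope.
Local Open Scope ring_scope.

Definition enorm (R : realType) (k : nat) (v : 'cV[R]_k) : R :=
  Num.sqrt (\sum_(i < k) (v i 0) ^+ 2).

(* X : R^N (x) R^{n x n}_s, represented as a family of n x n matrices *)
Definition tensor_sym (R : realType) (N n : nat) (X : 'I_N -> 'M[R]_n) : Prop :=
  forall a, (X a)^T = X a.

Definition tcontract (R : realType) (N n : nat) (X : 'I_N -> 'M[R]_n)
  (z : 'cV[R]_n) : 'cV[R]_N :=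
  \col_(a < N) \sum_(i < n) \sum_(j < n) X a i j * z i 0 * z j 0.

Definition symprod (R : realType) (N : nat) (a b : 'cV[R]_N) : 'M[R]_N :=
  2^-1 *: (a *m b^T + b *m a^T).

Definition mx_le (R : realType) (N : nat) (A B : 'M[R]_N) : Prop :=
  forall w : 'cV[R]_N, (w^T *m A *m w) 0 0 <= (w^T *m B *m w) 0 0.

Definition contact_jet2 (R : realType) (n N : nat)
  (u : 'cV[R]_n -> 'cV[R]_N) (x : 'cV[R]_n) (xi : 'cV[R]_N)
  (P : 'M[R]_(N, n)) (X : 'I_N -> 'M[R]_n) : Prop :=
  exists T : 'cV[R]_n -> 'M[R]_N,
    {within [set y | y != 0], continuous T} /\
    (T y @[y --> (0 : 'cV[R]_n)^'] --> (0 : 'M[R]_N)) /\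
    (\forall z \near x, z != x ->
       mx_le (symprod xi (u z - u x - P *m (z - x) - 2^-1 *: tcontract X (z - x)))
             ((enorm (z - x)) ^+ 2 *: T (z - x))).

Definition C2_on (R : realType) (A : set R) (s : R -> R) : Prop :=
  (forall t, A t -> derivable s t 1) /\
  (forall t, A t -> derivable (derive1 s) t 1) /\
  (forall t, A t -> {for t, continuous (derive1n 2 s)}).

(* Main.v *)
Require Import Defs.
From HB Require Import structures.
From mathcomp Require Import all_boot all_order all_algebra.
From mathcomp Require Import all_classical all_reals all_analysis.
From mathcomp Require Import ring lra.
Import Order.TTheory GRing.Theory Num.Theory.
Import numFieldNormedType.Exports.
Local Open Scope classical_set_scope.
Local Open Scope ring_scope.
Set Implicit Arguments. Unset Strict Implicit. Unset Printing Implicit Defensive.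
Section Alg.
Variable R : realType.

Definition dotv k (u v : 'cV[R]_k) : R := \sum_i u i 0 * v i 0.

Lemma dotvE k (u v : 'cV[R]_k) : (u^T *m v) 0 0 = dotv u v.
Proof. by rewrite mxE; apply: eq_bigr => i _; rewrite mxE. Qed.

Lemma dotvC k (u v : 'cV[R]_k) : dotv u v = dotv v u.
Proof. by apply: eq_bigr => i _; rewrite mulrC. Qed.

Lemma dotvDr k (u v w : 'cV[R]_k) : dotv u (v + w) = dotv u v + dotv u w.
Proof. by rewrite /dotv -big_split; apply: eq_bigr => i _; rewrite mxE mulrDr. Qed.

Lemma dotvZr k (u v : 'cV[R]_k) c : dotv u (c *: v) = c * dotv u v.
Proof. by rewrite /dotv mulr_sumr; apply: eq_bigr => i _; rewrite mxE mulrCA. Qed.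

Lemma dotvDl k (u v w : 'cV[R]_k) : dotv (v + w) u = dotv v u + dotv w u.
Proof. by rewrite dotvC dotvDr !(dotvC u). Qed.

Lemma dotvZl k (u v : 'cV[R]_k) c : dotv (c *: v) u = c * dotv v u.
Proof. by rewrite dotvC dotvZr dotvC. Qed.

Lemma dotvNr k (u v : 'cV[R]_k) : dotv u (- v) = - dotv u v.
Proof. by rewrite -scaleN1r dotvZr mulN1r. Qed.

Lemma dotvBr k (u v w : 'cV[R]_k) : dotv u (v - w) = dotv u v - dotv u w.
Proof. by rewrite dotvDr dotvNr. Qed.

Lemma dotvv_ge0 k (u : 'cV[R]_k) : 0 <= dotv u u.
Proof. by apply: sumr_ge0 => i _; rewrite -expr2 sqr_ge0. Qed.

Lemma enorm_sq k (v : 'cV[R]_k) : enorm v ^+ 2 = dotv v v.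
Proof.
rewrite /enorm sqr_sqrtr; last by apply: sumr_ge0 => i _; rewrite sqr_ge0.
by apply: eq_bigr => i _; rewrite expr2.
Qed.

Lemma mx11_mul m (A : 'M[R]_(1,1)) (B : 'M[R]_(1,m)) (C : 'M[R]_(m,1)) :
  (A *m B *m C) 0 0 = A 0 0 * (B *m C) 0 0.
Proof. by rewrite -mulmxA [LHS]mxE big_ord1. Qed.

Lemma symprod_form k (w a b : 'cV[R]_k) :
  (w^T *m symprod a b *m w) 0 0 = dotv w a * dotv w b.
Proof.
rewrite /symprod -scalemxAr -scalemxAl mxE mulmxDr mulmxDl mxE.
rewrite !mulmxA !mx11_mul !dotvE.
rewrite (dotvC b w) (dotvC a w).
set x := dotv w a; set y := dotv w b.
by field.
Qed.

Lemma scalar_form k (w : 'cV[R]_k) c :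
  (w^T *m (c *: 1%:M) *m w) 0 0 = c * dotv w w.
Proof. by rewrite -scalemxAr mulmx1 -scalemxAl mxE dotvE. Qed.

Lemma dotv_amgm k (u v : 'cV[R]_k) c : 0 < c ->
  2 * dotv u v <= c * dotv u u + dotv v v / c.
Proof.
move=> c0.
have H : 0 <= dotv (c *: u - v) (c *: u - v) by apply: dotvv_ge0.
rewrite dotvBr !dotvDl !dotvZl !dotvZr in H.
have dN (p q : 'cV[R]_k) : dotv (- p) q = - dotv p q by rewrite dotvC dotvNr dotvC.
rewrite !dN (dotvC v u) in H.
rewrite -subr_ge0 -(pmulr_rge0 _ c0).
set a := dotv u u; set b := dotv u v; set d := dotv v v.
have -> : c * (c * a + d / c - 2 * b) = c * (c * a) + c * - b - (c * b + - d).
  by field; rewrite gt_eqF.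
exact: H.
Qed.


Lemma proj_eq k (xi Q : 'cV[R]_k) :
  (1%:M - xi *m xi^T) *m Q = Q - (xi^T *m Q) 0 0 *: xi.
Proof.
rewrite mulmxBl mul1mx -mulmxA (mx11_scalar (xi^T *m Q)) mul_mx_scalar.
by rewrite !mxE eqxx mulr1n.
Qed.

Lemma alg_ii_i k (xi Q w : 'cV[R]_k) (s : R) : 0 < s -> dotv xi xi = 1 ->
  dotv xi Q <= - dotv (Q - dotv xi Q *: xi) (Q - dotv xi Q *: xi) / s + s ->
  dotv w xi * dotv w Q <= 2 * s * dotv w w.
Proof.
move=> s0 xi1.
set a := dotv xi Q; set q := Q - a *: xi => ha.
set A := dotv w xi; set W := dotv w w; set G := dotv q q.
have hQ : Q = q + a *: xi by rewrite /q subrK.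
have -> : dotv w Q = dotv w q + a * A by rewrite {1}hQ dotvDr dotvZr.
set D := dotv w q.
have h1 : 2 * (A * D) <= s * W + A ^+ 2 * (G / s).
  have := dotv_amgm w (A *: q) s0.
  by rewrite !dotvZr !dotvZl -/D -/W -/G expr2 !mulrA.
have h2 : A ^+ 2 <= W.
  have := dotv_amgm w (A *: xi) ltr01.
  rewrite !dotvZr !dotvZl xi1 -/A -/W !mul1r divr1 mulr1 -expr2.
  move=> h; lra.
set H := G / s.
have H0 : 0 <= H by apply: divr_ge0; [apply: dotvv_ge0 | exact: ltW].
have ha' : a <= - H + s by rewrite /H /G -mulNr.
have h3 : a * A ^+ 2 <= (- H + s) * A ^+ 2 by rewrite ler_wpM2r // sqr_ge0.
have h4 : s * A ^+ 2 <= s * W by rewrite ler_wpM2l // ltW.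
have h5 : 0 <= H * A ^+ 2 by rewrite mulr_ge0 // sqr_ge0.
have h6 : 0 <= s * W by apply: mulr_ge0; [exact: ltW | apply: dotvv_ge0].
have -> : A * (D + a * A) = A * D + a * A ^+ 2 by rewrite expr2; ring.
rewrite -/H in h1. clearbody H A D W a. nra.
Qed.

Definition bsum k (T : 'M[R]_k) : R := \sum_i \sum_j `|T i j|.

Lemma coord_sq_le k (w : 'cV[R]_k) i : w i 0 ^+ 2 <= dotv w w.
Proof.
rewrite /dotv (bigD1 i) //= -expr2 lerDl.
by apply: sumr_ge0 => j _; rewrite -expr2 sqr_ge0.
Qed.

Lemma form_le_bsum k (T : 'M[R]_k) (w : 'cV[R]_k) :
  (w^T *m T *m w) 0 0 <= bsum T * dotv w w.
Proof.
rewrite mxE /bsum exchange_big /= mulr_suml; apply: ler_sum => j _.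
rewrite mxE mulr_suml mulr_suml; apply: ler_sum => i _.
rewrite mxE.
have hij : `|w i 0| * `|w j 0| <= dotv w w.
  have := coord_sq_le w i; have := coord_sq_le w j.
  have := sqr_ge0 (`|w i 0| - `|w j 0|).
  rewrite -(real_normK (num_real (w i 0))) -(real_normK (num_real (w j 0))).
  move=> h hj hi. nra.
apply: le_trans (ler_norm _) _.
by rewrite !normrM mulrAC mulrC ler_wpM2l.
Qed.

Lemma alg_i_ii k (xi Q : 'cV[R]_k) (rho b sg : R) : 0 < rho -> 0 <= b ->
  0 < sg -> 4 * b <= sg -> dotv xi xi = 1 ->
  (forall w, dotv w xi * dotv w Q <= rho * b * dotv w w) ->
  dotv xi Q <= - dotv (Q - dotv xi Q *: xi) (Q - dotv xi Q *: xi) / (sg * rho)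
     + sg * rho.
Proof.
move=> r0 b0 s0 bs xi1 hw.
set a := dotv xi Q; set q := Q - a *: xi; set G := dotv q q.
have qxi : dotv q xi = 0.
  by rewrite /q dotvC dotvBr dotvZr xi1 mulr1 /a dotvC subrr.
have qQ : dotv q Q = G.
  have hQ : Q = q + a *: xi by rewrite /q subrK.
  by rewrite [in dotv q Q]hQ dotvDr dotvZr qxi mulr0 addr0.
set t := 2 / (sg * rho).
have := hw (xi + t *: q).
rewrite !dotvDl !dotvZl qQ (dotvC xi Q) -/a xi1 qxi mulr0 addr0 mul1r.
rewrite !dotvDr !dotvZr xi1 (dotvC xi q) qxi -/G mulr0 !addr0 add0r.
have G0 : 0 <= G by apply: dotvv_ge0.
have sr0 : 0 < sg * rho by rewrite mulr_gt0.
rewrite /t => h.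
have e1 : rho * b * (1 + 2 / (sg * rho) * (2 / (sg * rho) * G)) =
   rho * b + (4 * b) * G / (sg * (sg * rho)).
  by field; rewrite !gt_eqF.
rewrite e1 in h.
have e2 : (4 * b) * G / (sg * (sg * rho)) <= sg * G / (sg * (sg * rho)).
  apply: ler_wpM2r; first by rewrite invr_ge0 ltW // mulr_gt0.
  exact: ler_wpM2r.
have e3 : sg * G / (sg * (sg * rho)) = G / (sg * rho) by field; rewrite !gt_eqF.
have e4 : 2 / (sg * rho) * G = 2 * (G / (sg * rho)) by rewrite mulrAC mulrA.
have e5 : rho * b <= sg * rho.
  rewrite mulrC; apply: ler_wpM2r; [exact: ltW | lra].
rewrite e3 in e2; rewrite e4 dotvC -/a in h; rewrite mulNr.
lra.
Qed.

End Alg.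
Section QP.
Variable R : realType.

Definition qp (m : nat) (x : R) : R := (Num.max x 0) ^+ m.

Lemma qp_ge0 m x : 0 <= qp m x.
Proof. by rewrite /qp exprn_ge0 // le_max lexx orbT. Qed.

Lemma qp_pos m x : 0 < x -> qp m x = x ^+ m.
Proof. by move=> x0; rewrite /qp max_l // ltW. Qed.

Lemma qp_neg m x : x <= 0 -> qp m.+1 x = 0.
Proof. by move=> x0; rewrite /qp max_r // expr0n. Qed.

Lemma qp_le m x : `|qp m x| <= `|x| ^+ m.
Proof.
rewrite ger0_norm ?qp_ge0 // /qp; apply: lerXn2r.
- by rewrite nnegrE le_max lexx orbT.
- by rewrite nnegrE normr_ge0.
by rewrite ge_max normr_ge0 real_ler_norm ?num_real.
Qed.

Lemma qp_mono m : {homo qp m : x y / x <= y}.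
Proof.
move=> x y xy; rewrite /qp; apply: lerXn2r.
- by rewrite nnegrE le_max lexx orbT.
- by rewrite nnegrE le_max lexx orbT.
by rewrite ge_max le_max xy le_max lexx !orbT.
Qed.

Lemma is_derive_affine (a b t : R) : is_derive t 1 (fun s : R => a + b * s) b.
Proof.
have h := is_deriveD (is_derive_cst a t 1) (is_deriveZ b (is_derive_id t (1:R))).
have -> : (fun s : R => a + b * s) = cst a + b \*: id by apply/funext.
by apply: is_derive_eq h _; rewrite add0r /= [_%:A]mulr1.
Qed.

Lemma qp_is_derive m (a b t : R) : (0 < m)%N ->
  is_derive t 1 (fun s => qp m.+1 (a + b * s)) (m.+1%:R * qp m (a + b * t) * b).
Proof.
case: m => // m _.
have affc : {for t, continuous (fun s : R => a + b * s)}.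
  apply: differentiable_continuous; rewrite -derivable1_diffP.
  exact: (@ex_derive _ _ _ _ _ _ _ (is_derive_affine a b t)).
case: (ltgtP (a + b * t) 0) => hc.
-
  have nearneg : \forall s \near t, a + b * s < 0.
    exact: (affc _ (open_nbhs_nbhs (conj (@open_lt _ 0) hc))).
  have h0 : is_derive t 1 (cst (0:R)) (m.+2%:R * qp m.+1 (a + b * t) * b).
    by rewrite qp_neg ?ltW // mulr0 mul0r; apply: is_derive_cst.
  apply: near_eq_is_derive h0.
  near=> s; rewrite /= qp_neg // ltW //; near: s.
  exact: nearneg.
-
  have nearpos : \forall s \near t, 0 < a + b * s.
    exact: (affc _ (open_nbhs_nbhs (conj (@open_gt _ 0) hc))).
  have h0 := is_deriveX m.+2 (is_derive_affine a b t).
  have h1 : is_derive t 1 ((fun s : R => a + b * s) ^+ m.+2)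
      (m.+2%:R * qp m.+1 (a + b * t) * b).
    by apply: is_derive_eq h0 _; rewrite qp_pos //= mulrC.
  apply: near_eq_is_derive h1.
  near=> s; rewrite exprfctE qp_pos //; near: s.
  exact: nearpos.
-
  rewrite hc /qp maxxx expr0n mulr0 mul0r.
  set f := (fun s => _).
  have ft : f t = 0 by rewrite /f hc maxxx expr0n.
  have key : (fun h : R => h^-1 *: ((f \o shift t) (h *: 1) - f t)) @ 0^' --> (0:R).
    apply/cvgr0Pnorm_lt => e e0.
    set B := `|b| ^+ m.+2.
    have B0 : 0 <= B by rewrite exprn_ge0.
    set d := Num.min 1 (e / (B + 1)).
    have d0 : 0 < d by rewrite lt_min ltr01 divr_gt0 // ltr_wpDl.
    have hn : \forall h \near (0:R), `|h| < d.
      by apply/nbhs_norm0P; exists d => //= y.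
    apply: filterS (nbhs_dnbhs hn) => h hd.
    rewrite ft subr0 /= /f [h *: 1]mulr1.
    have -> : a + b * (h + t) = b * h by rewrite mulrDr addrCA hc addr0.
    have hd1 : `|h| <= 1 by apply: ltW; apply: lt_le_trans hd _; rewrite ge_min lexx.
    have hde : `|h| * (B + 1) < e.
      rewrite -ltr_pdivlMr ?ltr_wpDl //; apply: lt_le_trans hd _.
      by rewrite ge_min lexx orbT.
    rewrite normrM normfV.
    have := qp_le m.+2 (b * h); rewrite /qp => hq.
    have [->|h0] := eqVneq h 0; first by rewrite normr0 invr0 mul0r.
    have hp : 0 < `|h| by rewrite normr_gt0.
    rewrite -(ltr_pM2l hp) mulrA mulfV ?gt_eqF // mul1r.
    apply: le_lt_trans hq _.
    rewrite normrM exprMn -/B exprS.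
    have : `|h| ^+ m.+1 <= `|h| by rewrite exprS ler_piMr // exprn_ile1.
    move=> hh.
    have : B * (`|h| * `|h| ^+ m.+1) <= B * (`|h| * `|h|).
      by rewrite ler_wpM2l // ler_wpM2l.
    move=> h2.
    apply: le_lt_trans h2 _.
    rewrite -(ltr_pM2r hp) in hde.
    nra.
  apply: DeriveDef; first by apply/cvg_ex; exists 0.
  exact: cvg_lim key.
Unshelve. all: by end_near.
Qed.
End QP.
Section Sig.
Variable R : realType.
Variable d : nat -> R.
Hypothesis dpos : forall j, 0 < d j.
Hypothesis dle : forall j, d j <= (j.+1%:R)^-1.
Hypothesis dmono : forall j, d j.+1 <= d j.

Definition cc (j : nat) : R := (2^-1) ^+ j.
Definition psi (j : nat) (t : R) : R := 1 - qp 3 (1 + - (d j)^-1 * t).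
Definition SS (K : nat) (t : R) : R := \sum_(j < K) cc j * psi j t + 2 * cc K.
Definition Kt (t : R) : nat := Num.truncn (t^-1).
Definition sigm (t : R) : R := t + SS (Kt t) t.

Lemma cc_gt0 j : 0 < cc j.
Proof. by rewrite /cc exprn_gt0 // invr_gt0. Qed.

Lemma psi_le1 j t : psi j t <= 1.
Proof. by rewrite /psi lerBlDr lerDl qp_ge0. Qed.

Lemma psi_ge0 j t : 0 <= t -> 0 <= psi j t.
Proof.
move=> t0; rewrite /psi subr_ge0.
have hb : 1 + - (d j)^-1 * t <= 1.
  have : 0 <= (d j)^-1 * t by rewrite mulr_ge0 // invr_ge0 ltW.
  move=> h; lra.
have [hn|hp] := lerP (1 + - (d j)^-1 * t) 0; first by rewrite qp_neg.
by rewrite qp_pos // exprn_ile1 // ltW.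
Qed.

Lemma psi_one j t : d j <= t -> psi j t = 1.
Proof.
move=> h; rewrite /psi qp_neg ?subr0 //.
rewrite mulNr subr_le0 ler_pdivlMl ?mulr1 //.
Qed.

Lemma psi_mono j s t : s <= t -> psi j s <= psi j t.
Proof.
move=> st; rewrite /psi.
have : qp 3 (1 + - (d j)^-1 * t) <= qp 3 (1 + - (d j)^-1 * s).
  apply: qp_mono; rewrite lerD2l !mulNr lerN2 ler_wpM2l // invr_ge0 ltW //.
move=> h; lra.
Qed.

Lemma SS_step K t : psi K t = 1 -> SS K.+1 t = SS K t.
Proof.
move=> h; rewrite /SS big_ord_recr /= h mulr1 -addrA; congr (_ + _).
rewrite /cc exprS mulrA mulfV ?mul1r; last by rewrite pnatr_eq0.
by rewrite mulr2n mulrDl mul1r.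
Qed.

Lemma SS_stable m t : (forall j, (m <= j)%N -> psi j t = 1) ->
  forall K, (m <= K)%N -> SS K t = SS m t.
Proof.
move=> h; elim=> [|K IH]; first by rewrite leqn0 => /eqP ->.
rewrite leq_eqVlt => /orP[/eqP -> //|]; rewrite ltnS => mK.
by rewrite SS_step ?IH // h.
Qed.

Lemma SS_anti K t : SS K.+1 t <= SS K t.
Proof.
rewrite /SS big_ord_recr /= -addrA lerD2l.
have -> : 2 * cc K.+1 = cc K.
  by rewrite /cc exprS mulrA mulfV ?mul1r // pnatr_eq0.
have := psi_le1 K t; have := cc_gt0 K; move=> h1 h2; nra.
Qed.

Lemma SS_antiW K K' t : (K <= K')%N -> SS K' t <= SS K t.
Proof.
move=> /subnK <-; elim: (K' - K)%N => [|i IH]; first by rewrite add0n.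
by rewrite addSn; apply: le_trans (SS_anti _ _) IH.
Qed.

Lemma SS_ge0 K t : 0 <= t -> 0 <= SS K t.
Proof.
move=> t0; rewrite /SS addr_ge0 //; last by rewrite mulr_ge0 // ltW // cc_gt0.
by apply: sumr_ge0 => j _; rewrite mulr_ge0 ?psi_ge0 // ltW // cc_gt0.
Qed.

Lemma d_le t j : 0 < t -> (Kt t <= j)%N -> d j <= t.
Proof.
move=> t0 hj; apply: (le_trans (dle j)).
have h := truncnS_gt (t^-1).
have : (Kt t).+1%:R <= j.+1%:R :> R by rewrite ler_nat.
rewrite /Kt => h2.
rewrite -(invrK t) lef_pV2 ?posrE ?invr_gt0 //; first by apply: ltW; apply: lt_le_trans h h2.
Qed.

Lemma Kt_ok t j : 0 < t -> (Kt t <= j)%N -> psi j t = 1.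
Proof. by move=> t0 hj; apply: psi_one; apply: d_le. Qed.

Lemma sig_eq t K : 0 < t -> (Kt t <= K)%N -> sigm t = t + SS K t.
Proof.
move=> t0 hK; rewrite /sigm (SS_stable _ hK) // => j hj.
exact: Kt_ok.
Qed.

Lemma sig_lower t k : 0 < t -> t < d k -> d k.+1 <= t -> cc k <= sigm t.
Proof.
move=> t0 tk kt.
have hm : forall j, (k.+1 <= j)%N -> psi j t = 1.
  move=> j hj; apply: psi_one; apply: le_trans kt.
  move/subnK: hj => <-; elim: (j - k.+1)%N => [|i IH] //=.
  by rewrite addSn; apply: le_trans (dmono _) IH.
rewrite (sig_eq (K := maxn (Kt t) k.+1) t0) ?leq_maxl //.
rewrite (SS_stable hm) ?leq_maxr //.
rewrite /SS big_ord_recr /=.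
have -> : 2 * cc k.+1 = cc k.
  by rewrite /cc exprS mulrA mulfV ?mul1r // pnatr_eq0.
have h1 : 0 <= \sum_(i < k) cc i * psi i t.
  by apply: sumr_ge0 => j _; rewrite mulr_ge0 ?psi_ge0 // ltW // cc_gt0.
have h2 : 0 <= cc k * psi k t by rewrite mulr_ge0 ?psi_ge0 // ltW // cc_gt0.
lra.
Qed.

Lemma exists_k t : 0 < t -> t < d 0 -> exists k, t < d k /\ d k.+1 <= t.
Proof.
move=> t0 td.
suff : forall m, d m <= t -> exists k, t < d k /\ d k.+1 <= t.
  by apply; apply: (d_le (j := Kt t)).
elim=> [|m IH] h; first by move: (lt_le_trans td h); rewrite ltxx.
have [hm|hm] := lerP (d m) t; first exact: IH.
by exists m.
Qed.

Lemma sig_strict s t : 0 < s -> s < t -> sigm s < sigm t.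
Proof.
move=> s0 st; have t0 : 0 < t by apply: lt_trans st.
rewrite (sig_eq (K := maxn (Kt s) (Kt t)) s0) ?leq_maxl //.
rewrite (sig_eq (K := maxn (Kt s) (Kt t)) t0) ?leq_maxr //.
apply: ltr_leD => //; rewrite /SS lerD2r; apply: ler_sum => j _.
by rewrite ler_wpM2l ?psi_mono ?ltW // cc_gt0.
Qed.



Lemma is_derive_sumf (K : nat) (f : nat -> R -> R) (df : nat -> R) (t : R) :
  (forall j, is_derive t 1 (f j) (df j)) ->
  is_derive t 1 (fun s => \sum_(j < K) f j s) (\sum_(j < K) df j).
Proof.
move=> h; elim: K => [|K IH].
  have -> : (fun s => \sum_(j < 0) f j s) = cst 0 by apply/funext => s; rewrite big_ord0.
  by rewrite big_ord0; apply: is_derive_cst.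
have -> : (fun s => \sum_(j < K.+1) f j s) = (fun s => \sum_(j < K) f j s) + f K.
  by apply/funext => s; rewrite big_ord_recr.
by rewrite big_ord_recr; apply: is_deriveD.
Qed.

Lemma continuous_sumf (K : nat) (f : nat -> R -> R) (t : R) :
  (forall j, {for t, continuous (f j)}) ->
  {for t, continuous (fun s => \sum_(j < K) f j s)}.
Proof.
move=> h; elim: K => [|K IH].
  have -> : (fun s => \sum_(j < 0) f j s) = cst 0 by apply/funext => s; rewrite big_ord0.
  exact: cst_continuous.
have -> : (fun s => \sum_(j < K.+1) f j s) = (fun s => \sum_(j < K) f j s) + f K.
  by apply/funext => s; rewrite big_ord_recr.
exact: continuousD.
Qed.

Lemma qpZ_derive m (al a b t : R) : (0 < m)%N ->
  is_derive t 1 (fun s => al * qp m.+1 (a + b * s))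
    (al * (m.+1%:R * qp m (a + b * t) * b)).
Proof.
move=> m0; have h := is_deriveZ al (qp_is_derive a b t m0).
have -> : (fun s => al * qp m.+1 (a + b * s)) = al \*: (fun s => qp m.+1 (a + b * s)).
  by apply/funext.
exact: h.
Qed.

Definition bb j : R := - (d j)^-1.
Definition FF K (t : R) : R := t + SS K t.
Definition G1 K (t : R) : R :=
  1 + \sum_(j < K) (- (cc j * 3 * bb j)) * qp 2 (1 + bb j * t).
Definition G2 K (t : R) : R :=
  \sum_(j < K) (- (cc j * 3 * bb j)) * (2%:R * qp 1 (1 + bb j * t) * bb j).

Lemma FF_derive (K : nat) (t : R) : is_derive t 1 (FF K) (G1 K t).
Proof.
have hj : forall j : nat, is_derive t 1 (fun s => cc j * psi j s)
    ((- (cc j * 3 * bb j)) * qp 2 (1 + bb j * t)).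
  move=> j.
  have h := qpZ_derive (- cc j) 1 (bb j) t (isT : (0 < 2)%N).
  have -> : (fun s => cc j * psi j s) = cst (cc j) + (fun s => - cc j * qp 3 (1 + bb j * s)).
    by apply/funext => s; rewrite !fctE /psi /bb; ring.
  have h2 := is_deriveD (is_derive_cst (cc j) t 1) h.
  apply: is_derive_eq h2 _.
  by rewrite add0r; ring.
have h := is_derive_sumf K hj.
have -> : FF K = id + ((fun s => \sum_(j < K) cc j * psi j s) + cst (2 * cc K)).
  by apply/funext => s; rewrite !fctE /FF /SS addrA.
have h2 := is_deriveD (is_derive_id t (1:R)) (is_deriveD h (is_derive_cst (2 * cc K) t 1)).
apply: is_derive_eq h2 _.
by rewrite addr0 /G1.
Qed.

Lemma G1_derive (K : nat) (t : R) : is_derive t 1 (G1 K) (G2 K t).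
Proof.
have hj : forall j : nat, is_derive t 1 (fun s => (- (cc j * 3 * bb j)) * qp 2 (1 + bb j * s))
    ((- (cc j * 3 * bb j)) * (2%:R * qp 1 (1 + bb j * t) * bb j)).
  by move=> j; apply: qpZ_derive.
have h := is_derive_sumf K hj.
have -> : G1 K = cst 1 + (fun s => \sum_(j < K) (- (cc j * 3 * bb j)) * qp 2 (1 + bb j * s)).
  by apply/funext.
have h2 := is_deriveD (is_derive_cst (1:R) t 1) h.
apply: is_derive_eq h2 _.
by rewrite add0r.
Qed.

Lemma G2_cont (K : nat) (t : R) : {for t, continuous (G2 K)}.
Proof.
apply: (@continuous_sumf K (fun j s => (- (cc j * 3 * bb j)) * (2%:R * qp 1 (1 + bb j * s) * bb j))) => j.
apply: (@continuousM _ _ (cst _) (fun s => 2%:R * qp 1 (1 + bb j * s) * bb j)); first exact: cst_continuous.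
apply: (@continuousM _ _ (fun s => 2%:R * qp 1 (1 + bb j * s)) (cst _)); last exact: cst_continuous.
apply: (@continuousM _ _ (cst _) (fun s => qp 1 (1 + bb j * s))); first exact: cst_continuous.
have -> : (fun s => qp 1 (1 + bb j * s)) = (fun s => 1 + bb j * s) \max cst 0.
  by apply/funext => s; rewrite /qp expr1.
apply: continuous_max; last exact: cst_continuous.
apply: differentiable_continuous; rewrite -derivable1_diffP.
exact: (@ex_derive _ _ _ _ _ _ _ (is_derive_affine 1 (bb j) t)).
Qed.


Lemma FF_cont (K : nat) (t : R) : {for t, continuous (FF K)}.
Proof.
apply: differentiable_continuous; rewrite -derivable1_diffP.
exact: (@ex_derive _ _ _ _ _ _ _ (FF_derive K t)).
Qed.

Lemma sig_FF t0 t : 0 < t0 -> t0 / 2 < t -> sigm t = FF (Kt (t0 / 2)) t.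
Proof.
move=> t00 ht.
have c0 : 0 < t0 / 2 by rewrite divr_gt0.
have t0' : 0 < t by apply: lt_trans ht.
rewrite (@sig_eq t (Kt (t0 / 2))) //.
apply: le_truncn; rewrite lef_pV2 ?posrE //; exact: ltW.
Qed.

Lemma near_gt (c t : R) : c < t -> \forall s \near t, c < s.
Proof. by move=> h; exact: (open_nbhs_nbhs (conj (@open_gt _ c) h)). Qed.

Lemma sig_C2 t0 : 0 < t0 ->
  [/\ derivable sigm t0 1, derivable (derive1 sigm) t0 1 &
      {for t0, continuous (derive1n 2 sigm)}].
Proof.
move=> t00.
set c := t0 / 2; set K := Kt c.
have c0 : 0 < c by rewrite divr_gt0.
have ct0 : c < t0 by rewrite /c ltr_pdivrMr // ltr_pMr // ltr1n.
have E : forall t, c < t -> \forall s \near t, FF K s = sigm s.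
  move=> t ht; apply: filterS (near_gt ht) => s hs.
  by rewrite (sig_FF t00 hs).
have D1 : forall t, c < t -> derive1 sigm t = G1 K t.
  move=> t ht; rewrite derive1E -(near_eq_derive _ (E t ht)).
  exact: (@derive_val _ _ _ _ _ _ _ (FF_derive K t)).
have E2 : forall t, c < t -> \forall s \near t, G1 K s = derive1 sigm s.
  move=> t ht; apply: filterS (near_gt ht) => s hs.
  by rewrite D1.
have D2 : forall t, c < t -> derive1n 2 sigm t = G2 K t.
  move=> t ht; rewrite /= derive1E -(near_eq_derive _ (E2 t ht)).
  exact: (@derive_val _ _ _ _ _ _ _ (G1_derive K t)).
split.
- apply: (near_eq_derivable (E t0 ct0)).
  exact: (@ex_derive _ _ _ _ _ _ _ (FF_derive K t0)).
- apply: (near_eq_derivable (E2 t0 ct0)).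
  exact: (@ex_derive _ _ _ _ _ _ _ (G1_derive K t0)).
- have E3 : {near t0, G2 K =1 derive1n 2 sigm}.
    by apply: filterS (near_gt ct0) => s hs; rewrite D2.
  suff H : (derive1n 2 sigm) x @[x --> t0] --> (derive1n 2 sigm) t0 by [].
  rewrite (D2 t0 ct0).
  apply: cvg_trans (near_eq_cvg E3) _.
  exact: G2_cont.
Qed.

Lemma cc_small e : 0 < e -> exists m, 2 * cc m < e.
Proof.
move=> e0; exists (Num.truncn (2 / e)).
set m := Num.truncn (2 / e).
have h1 : 2 / e < m.+1%:R by apply: truncnS_gt.
have h2 : cc m <= (m.+1%:R)^-1.
  rewrite /cc exprVn lef_pV2 ?posrE ?exprn_gt0 ?ltr0n //.
  by rewrite -natrX ler_nat ltn_expl.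
have m0 : (0 : R) < m.+1%:R by rewrite ltr0n.
have h3 : 2 * (m.+1%:R)^-1 < e.
  by rewrite ltr_pdivrMr // mulrC -ltr_pdivrMr.
apply: le_lt_trans h3; rewrite ler_wpM2l //.
Qed.

Lemma psi0 j : psi j 0 = 0.
Proof. by rewrite /psi mulr0 addr0 qp_pos // expr1n subrr. Qed.

Lemma sig_lim : sigm t @[t --> 0^'+] --> 0.
Proof.
apply/cvgrPdist_lt => e e0.
have e20 : 0 < e / 2 by rewrite divr_gt0.
have [m hm] := cc_small e20.
have FF0 : FF m 0 = 2 * cc m.
  rewrite /FF /SS add0r big1 ?add0r // => j _; by rewrite psi0 mulr0.
have := @FF_cont m 0; move/cvgrPdist_lt => /(_ _ e20) H.
rewrite /at_right near_withinE; apply: filterS H => t Ht t0.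
rewrite FF0 in Ht; rewrite sub0r normrN.
have sg0 : 0 <= sigm t.
  have := @SS_ge0 (Kt t) t (ltW t0); move=> h; rewrite /sigm; lra.
rewrite ger0_norm //.
rewrite (@sig_eq t (maxn (Kt t) m)) ?leq_maxl //.
have h1 : SS (maxn (Kt t) m) t <= SS m t by apply: SS_antiW; rewrite leq_maxr.
have h2 : FF m t < 2 * cc m + e / 2.
  have := ler_norm (FF m t - 2 * cc m); rewrite distrC => h; lra.
rewrite /FF in h2; lra.
Qed.

Lemma sig_mono : {in `]0, +oo[ &, {mono sigm : s t / s < t}}.
Proof.
move=> s t; rewrite !in_itv /= !andbT => s0 t0.
case: (ltgtP s t) => [st|ts|->]; first by rewrite sig_strict.
  by apply/negbTE; rewrite -leNgt ltW // sig_strict.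
by rewrite ltxx.
Qed.

Lemma sig_pos t : 0 < t -> 0 < sigm t.
Proof. by move=> t0; rewrite /sigm ltr_pwDl // SS_ge0 // ltW. Qed.

End Sig.
Section En.
Variable R : realType.

Lemma enorm_ge0 k (v : 'cV[R]_k) : 0 <= enorm v.
Proof. exact: sqrtr_ge0. Qed.

Lemma coord_le_enorm k (v : 'cV[R]_k) i j : `|v i j| <= enorm v.
Proof.
rewrite (ord1 j) -sqrtr_sqr /enorm; apply: ler_wsqrtr.
by have := coord_sq_le v i; rewrite /dotv (eq_bigr (fun i => v i 0 ^+ 2)) // => ? _; rewrite expr2.
Qed.

Lemma mxnorm_le_enorm k (v : 'cV[R]_k) : `|v| <= enorm v.
Proof.
change (mx_norm v <= enorm v); rewrite mx_normrE; apply: bigmax_le; first exact: enorm_ge0.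
by move=> ij _; apply: coord_le_enorm.
Qed.

Lemma enorm_eq0 k (v : 'cV[R]_k) : enorm v = 0 -> v = 0.
Proof.
move=> h; have := enorm_sq v; rewrite h expr0n /= => /esym /eqP.
rewrite /dotv psumr_eq0; last by move=> i _; rewrite -expr2 sqr_ge0.
move=> /allP hv; apply/matrixP => i j; rewrite (ord1 j) mxE.
have := hv i (mem_index_enum i); rewrite /= mulf_eq0 orbb => /eqP //.
Qed.

Lemma enorm_gt0 k (v : 'cV[R]_k) : v != 0 -> 0 < enorm v.
Proof.
move=> hv; rewrite lt_def enorm_ge0 andbT; apply/eqP => h.
by move/eqP: hv; apply; apply: enorm_eq0.
Qed.

Lemma enorm0 k : enorm (0 : 'cV[R]_k) = 0.
Proof. by rewrite /enorm big1 ?sqrtr0 // => i _; rewrite mxE expr0n. Qed.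

Lemma enorm_cont k : continuous (@enorm R k).
Proof.
move=> v; apply: continuous_comp; last exact: sqrt_continuous.
apply: (@continuous_big _ _ +%R 0 xpredT add_continuous).
move=> i _ w.
have -> : (fun v : 'cV[R]_k => v i 0 ^+ 2) = (fun v => v i 0) \* (fun v => v i 0).
  by apply/funext => u; rewrite expr2.
by apply: continuousM; exact: coord_continuous.
Qed.

Lemma near0_enorm k (P : 'cV[R]_k -> Prop) :
  (\forall y \near (0 : 'cV[R]_k), P y) -> exists2 e, 0 < e & forall y, enorm y < e -> P y.
Proof.
move=> /nbhs_norm0P [e e0 he]; exists e => // y hy; apply: he.
by apply: le_lt_trans (mxnorm_le_enorm y) hy.
Qed.

Lemma bsum_cont k : continuous (@bsum R k).
Proof.
apply: (@continuous_big _ _ +%R 0 xpredT add_continuous) => i _.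
apply: (@continuous_big _ _ +%R 0 xpredT add_continuous) => j _ M.
apply: continuous_comp; first exact: coord_continuous.
exact: norm_continuous.
Qed.

Lemma bsum0 k : bsum (0 : 'M[R]_k) = 0.
Proof. by rewrite /bsum big1 // => i _; rewrite big1 // => j _; rewrite mxE normr0. Qed.

Lemma bsum_ge0 k (M : 'M[R]_k) : 0 <= bsum M.
Proof. by apply: sumr_ge0 => i _; apply: sumr_ge0 => j _. Qed.

Fixpoint mkd (ef : nat -> R) (k : nat) : R :=
  match k with
  | 0 => Num.min (ef 0%N) 1
  | k'.+1 => Num.min (mkd ef k') (Num.min (ef k) (k.+1%:R)^-1)
  end.

Lemma mkd_pos ef : (forall k, 0 < ef k) -> forall k, 0 < mkd ef k.
Proof.
move=> h; elim=> [|k IH] /=; first by rewrite lt_min h ltr01.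
by rewrite !lt_min IH h invr_gt0 ltr0n.
Qed.

Lemma mkd_le_ef ef k : mkd ef k <= ef k.
Proof. by case: k => [|k] /=; rewrite !ge_min ?invr1 ?lexx ?orbT. Qed.

Lemma mkd_le_inv ef k : mkd ef k <= (k.+1%:R)^-1.
Proof. by case: k => [|k] /=; rewrite ?ge_min ?invr1 ?lexx ?orbT // !ge_min lexx !orbT. Qed.

Lemma mkd_mono ef k : mkd ef k.+1 <= mkd ef k.
Proof. by rewrite /= ge_min lexx. Qed.

End En.

Lemma near_lt (R : realType) (c t : R) : t < c -> \forall s \near t, s < c.
Proof. by move=> h; exact: (open_nbhs_nbhs (conj (@open_lt _ c) h)). Qed.

Lemma sigma_pos (R : realType) (sigma : R -> R) :
  {in `]0, +oo[ &, {mono sigma : s t / s < t}} ->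
  (sigma t @[t --> 0^'+] --> 0) -> forall t, 0 < t -> 0 < sigma t.
Proof.
move=> hm hl t t0.
have t20 : 0 < t / 2 by rewrite divr_gt0.
have ht2 : t / 2 < t by rewrite ltr_pdivrMr // ltr_pMr // ltr1n.
have hs : sigma (t / 2) < sigma t by rewrite hm // in_itv /= andbT.
suff : 0 <= sigma (t / 2) by move=> h; apply: le_lt_trans h hs.
rewrite leNgt; apply/negP => hneg.
have e0 : 0 < - sigma (t / 2) by rewrite oppr_gt0.
move/cvgrPdist_lt: hl => /(_ _ e0) H1.
have H2 : \forall s \near 0^'+, s < t / 2.
  rewrite /at_right near_withinE.
  by apply: filterS (near_lt t20) => s hs' _.
have PF : ProperFilter (0:R)^'+ by exact: at_right_proper_filter.
have := filter_ex (filterI (filterI H1 H2) (nbhs_right_gt (0:R))).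
case => s [[h1 h2] h3].
have h4 : sigma s < sigma (t / 2) by rewrite hm // in_itv /= andbT.
move: h1; rewrite sub0r normrN => h1.
have h5 := ler_norm (- sigma s); rewrite normrN in h5; lra.
Qed.

Lemma enorm_dnbhs (R : realType) n :
  enorm y @[y --> (0 : 'cV[R]_n)^'] --> (0:R)^'+.
Proof.
move=> A hA /=.
have hc : enorm y @[y --> (0 : 'cV[R]_n)] --> (0:R).
  suff : enorm y @[y --> (0 : 'cV[R]_n)] --> enorm (0 : 'cV[R]_n) by rewrite enorm0.
  exact: enorm_cont.
have hA' : \forall t \near (0:R), 0 < t -> A t := hA.
have h : \forall y \near (0 : 'cV[R]_n), 0 < enorm y -> A (enorm y) := hc _ hA'.
change (\forall y \near (0 : 'cV[R]_n), y != 0 -> A (enorm y)).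
apply: filterS h => y hy y0; apply: hy; exact: enorm_gt0.
Qed.

Lemma dir_back (R : realType) (n N : nat)
  (u : 'cV[R]_n -> 'cV[R]_N) (x : 'cV[R]_n) (xi : 'cV[R]_N)
  (P : 'M[R]_(N, n)) (X : 'I_N -> 'M[R]_n) :
  enorm xi = 1 ->
  (exists sigma : R -> R,
     {in `]0, +oo[ &, {mono sigma : s t / s < t}} /\
     C2_on `]0, +oo[ sigma /\
     (sigma t @[t --> 0^'+] --> 0) /\
     (\forall z \near (0 : 'cV[R]_n)^',
        let Q := u (z + x) - u x - P *m z - 2^-1 *: tcontract X z in
        (xi^T *m Q) 0 0 <=
          - (enorm ((1%:M - xi *m xi^T) *m Q)) ^+ 2
              / (sigma (enorm z) * (enorm z) ^+ 2)
          + sigma (enorm z) * (enorm z) ^+ 2)) ->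
  contact_jet2 u x xi P X.
Proof.
move=> xi1 [sg [hm [hC2 [hl hnear]]]].
have sgpos := sigma_pos hm hl.
have dxi : dotv xi xi = 1 by rewrite -enorm_sq xi1 expr1n.
exists (fun y => (2 * sg (enorm y)) *: (1%:M : 'M[R]_N)).
split; [|split].
- apply: continuous_in_subspaceT => y; rewrite inE /= => hy.
  apply: (@cvgZr_tmp _ _ _ _ (nbhs_filter y)).
  apply: cvgMl_tmp.
  apply: (continuous_comp (@enorm_cont R n y)).
  apply: differentiable_continuous; rewrite -derivable1_diffP.
  apply: hC2.1.
  by rewrite /= in_itv /= andbT; exact: enorm_gt0.
- have h1 := cvg_comp _ _ (@enorm_dnbhs R n) hl.
  have h2 : (fun y => 2 * sg (enorm y)) @ (0:'cV[R]_n)^' --> (2 * 0 : R).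
    by apply: cvgMl_tmp; exact: h1.
  have h3 : (fun y => (2 * sg (enorm y)) *: (1%:M : 'M[R]_N)) @ (0:'cV[R]_n)^'
     --> ((2 * 0 : R) *: (1%:M : 'M[R]_N)).
    by apply: cvgZr_tmp; exact: h2.
  by rewrite mulr0 scale0r in h3.
- rewrite (near_shift 0 x).
  move: hnear; rewrite /dnbhs near_withinE => hnear.
  apply: filterS hnear => y hy /=.
  rewrite subr0 addrK => hyx.
  have y0 : y != 0 by apply: contra_neq hyx => ->; rewrite add0r.
  move: (hy y0) => /=.
  set Q := u (y + x) - u x - P *m y - 2^-1 *: tcontract X y.
  rewrite proj_eq !dotvE enorm_sq => hQ w.
  rewrite symprod_form scalerA scalar_form.
  have r0 : 0 < enorm y by exact: enorm_gt0.
  have s0 : 0 < sg (enorm y) * enorm y ^+ 2 by rewrite mulr_gt0 ?exprn_gt0 ?sgpos.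
  have := alg_ii_i w s0 dxi hQ.
  by have -> : enorm y ^+ 2 * (2 * sg (enorm y)) = 2 * (sg (enorm y) * enorm y ^+ 2) by ring.
Qed.

Lemma dir_fwd (R : realType) (n N : nat)
  (u : 'cV[R]_n -> 'cV[R]_N) (x : 'cV[R]_n) (xi : 'cV[R]_N)
  (P : 'M[R]_(N, n)) (X : 'I_N -> 'M[R]_n) :
  enorm xi = 1 -> contact_jet2 u x xi P X ->
  (exists sigma : R -> R,
     {in `]0, +oo[ &, {mono sigma : s t / s < t}} /\
     C2_on `]0, +oo[ sigma /\
     (sigma t @[t --> 0^'+] --> 0) /\
     (\forall z \near (0 : 'cV[R]_n)^',
        let Q := u (z + x) - u x - P *m z - 2^-1 *: tcontract X z in
        (xi^T *m Q) 0 0 <=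
          - (enorm ((1%:M - xi *m xi^T) *m Q)) ^+ 2
              / (sigma (enorm z) * (enorm z) ^+ 2)
          + sigma (enorm z) * (enorm z) ^+ 2)).
Proof.
move=> xi1 [T [hTc [hT0 hnear]]].
have dxi : dotv xi xi = 1 by rewrite -enorm_sq xi1 expr1n.
set Qf := fun z => u (z + x) - u x - P *m z - 2^-1 *: tcontract X z.
set Good := fun y => mx_le (symprod xi (Qf y)) (enorm y ^+ 2 *: T y).
have hG : \forall y \near (0 : 'cV[R]_n), y != 0 -> Good y.
  move: hnear; rewrite (near_shift 0 x) => h; apply: filterS h => y /=.
  rewrite subr0 addrK => hy y0; apply: hy.
  by apply: contra_neq y0 => h; rewrite -(addrK x y) h subrr.
have hb : (fun y => bsum (T y)) @ (0 : 'cV[R]_n)^' --> (0:R).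
  have := continuous_cvg _ (@bsum_cont R N 0) hT0.
  by rewrite bsum0 => /(_ (dnbhs_filter _)).
have hk : forall k, exists e : R, 0 < e /\ forall y, enorm y < e -> y != 0 ->
    4 * bsum (T y) <= cc R k /\ Good y.
  move=> k.
  have ck4 : 0 < cc R k / 4 by rewrite divr_gt0 ?cc_gt0.
  have h1 := @cvgr0_norm_lt _ _ _ _ (dnbhs_filter (0 : 'cV[R]_n)) _ hb _ ck4.
  have h1' : \forall y \near (0 : 'cV[R]_n), y != 0 -> `|bsum (T y)| < cc R k / 4 := h1.
  have h2 : \forall y \near (0 : 'cV[R]_n), y != 0 -> `|bsum (T y)| < cc R k / 4 /\ Good y.
    by apply: filterS2 h1' hG => y a b y0; split; [exact: a | exact: b].
  have [e e0 he] := near0_enorm h2.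
  exists e; split => // y hy y0; have [ha hg] := he y hy y0; split => //.
  rewrite -ler_pdivlMl // mulrC; apply: ltW; apply: le_lt_trans ha.
  exact: ler_norm.
case: (choice hk) => ef hef.
have efpos : forall k, 0 < ef k by move=> k; case: (hef k).
set dd := mkd ef.
have ddpos : forall k, 0 < dd k by apply: mkd_pos.
have ddle : forall j, dd j <= (j.+1%:R)^-1 by move=> j; apply: mkd_le_inv.
have ddmono : forall j, dd j.+1 <= dd j by move=> j; apply: mkd_mono.
have Pk : forall k y, enorm y < dd k -> y != 0 -> 4 * bsum (T y) <= cc R k /\ Good y.
  move=> k y hy y0; apply: (hef k).2 y0.
  by apply: lt_le_trans hy (mkd_le_ef _ _).
exists (sigm dd).
split; first exact: sig_mono.
split.
  split; [|split] => t; rewrite /= in_itv /= andbT => t0.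
  - by case: (sig_C2 ddpos ddle t0).
  - by case: (sig_C2 ddpos ddle t0).
  - by case: (sig_C2 ddpos ddle t0).
split; first exact: sig_lim.
rewrite /dnbhs near_withinE.
have hr : \forall z \near (0 : 'cV[R]_n), enorm z < dd 0%N.
  have := @enorm_cont R n 0; rewrite /continuous_at enorm0.
  move=> /cvgrPdist_lt /(_ _ (ddpos 0%N)).
  by apply: filterS => z; rewrite sub0r normrN ger0_norm // enorm_ge0.
apply: filterS hr => z hz z0 /=.
have r0 : 0 < enorm z by exact: enorm_gt0.
have [k [hk1 hk2]] := exists_k ddle r0 hz.
have [hb4 hGz] := Pk k z hk1 z0.
have low := sig_lower ddpos ddle ddmono r0 hk1 hk2.
rewrite proj_eq !dotvE enorm_sq.
apply: (@alg_i_ii _ _ _ _ _ (bsum (T z))).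
- by rewrite exprn_gt0.
- exact: bsum_ge0.
- exact: sig_pos.
- exact: le_trans hb4 low.
- exact: dxi.
move=> w; have := hGz w.
rewrite symprod_form -scalemxAr -scalemxAl mxE => h.
apply: le_trans h _; rewrite -mulrA ler_wpM2l ?exprn_ge0 ?enorm_ge0 //.
exact: form_le_bsum.
Qed.

Unset Implicit Arguments.

Theorem theorem27 (R : realType) (n N : nat) (Omega : set 'cV[R]_n)
  (u : 'cV[R]_n -> 'cV[R]_N) (x : 'cV[R]_n) (xi : 'cV[R]_N)
  (P : 'M[R]_(N, n)) (X : 'I_N -> 'M[R]_n) :
  open Omega -> {within Omega, continuous u} -> Omega x ->
  enorm xi = 1 -> tensor_sym X ->
  (contact_jet2 u x xi P X <->
   exists sigma : R -> R,
     {in `]0, +oo[ &, {mono sigma : s t / s < t}} /\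
     C2_on `]0, +oo[ sigma /\
     (sigma t @[t --> 0^'+] --> 0) /\
     (\forall z \near (0 : 'cV[R]_n)^',
        let Q := u (z + x) - u x - P *m z - 2^-1 *: tcontract X z in
        (xi^T *m Q) 0 0 <=
          - (enorm ((1%:M - xi *m xi^T) *m Q)) ^+ 2
              / (sigma (enorm z) * (enorm z) ^+ 2)
          + sigma (enorm z) * (enorm z) ^+ 2)).
Proof.
move=> _ _ _ xi1 _; split; [exact: dir_fwd | exact: dir_back].
Qed.
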